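(* Let $n\ge1$ and let $\mathbf{P}_{pen}=[p_{ij}]_{i,j=1}^{n+3}$ be a real symmetric non-negative definite matrix such that the $2\times2$ matrix $\begin{pmatrix}p_{1,1}&p_{1,n+3}\\ p_{n+3,1}&p_{n+3,n+3}\end{pmatrix}$ is invertible. Let $\Pi:\mathbb{R}^{n+3}\to\mathbb{R}^{n+1}$, $\Pi(u_1,\boldsymbol{p}^T,u_{n+1})^T=\boldsymbol{p}$, and for $\lambda>0$ let $\mathbf{H}_{\mathbf{P}_{pen}}(\lambda)=(\lambda\mathbf{P}_{pen}+\Pi^T\Pi)^{-1}$, so that $\mathbf{H}_{\mathbf{P}_{pen}}(\lambda)(0,\boldsymbol{y}^T,0)^T$ is the unique minimizer over $(u_1,\boldsymbol{p},u_{n+1})\in\mathbb{R}\times\mathbb{R}^{n+1}\times\mathbb{R}$ of $\lambda(u_1,\boldsymbol{p}^T,u_{n+1})\mathbf{P}_{pen}(u_1,\boldsymbol{p}^T,u_{n+1})^T+\|\boldsymbol{y}-\boldsymbol{p}\|^2$. Let $\boldsymbol{y}\in\mathbb{R}^{n+1}$. (1) As $\lambda\to0^+$, $\mathbf{H}_{\mathbf{P}_{pen}}(\lambda)(0,\boldsymbol{y}^T,0)^T\to(u_1^0,\boldsymbol{y}^T,u_{n+1}^0)^T$, where $(u_1^0,u_{n+1}^0)$ is a minimizer of $(u_1,u_{n+1})\mapsto(u_1,\boldsymbol{y}^T,u_{n+1})\mathbf{P}_{pen}(u_1,\boldsymbol{y}^T,u_{n+1})^T$, i.e. a solution of $$u_1p_{1,1}+u_{n+1}p_{1,n+3}=-\sum_{i=1}^{n+1}y_ip_{1,i+1},\qquad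 u_1p_{n+3,1}+u_{n+1}p_{n+3,n+3}=-\sum_{i=1}^{n+1}y_ip_{n+3,i+1}.$$ In particular, if $\boldsymbol{y}$ is not orthogonal to the space spanned by $(p_{1,j}:j=2,\dots,n+2)^T$ and $(p_{n+3,j}:j=2,\dots,n+2)^T$, then $u_1^0$ and $u_{n+1}^0$ are not both zero. (2) As $\lambda\to+\infty$, $\mathbf{H}_{\mathbf{P}_{pen}}(\lambda)(0,\boldsymbol{y}^T,0)^T\to\arg\min\{\|\boldsymbol{y}-\boldsymbol{p}\|^2:\ \mathbf{P}_{pen}(u_1,\boldsymbol{p}^T,u_{n+1})^T=0\}$.
   Context: Vectors of $\mathbb{R}^{n+3}$ are written $(u_1,\boldsymbol{p}^T,u_{n+1})^T$ with $u_1,u_{n+1}\in\mathbb{R}$ and $\boldsymbol{p}\in\mathbb{R}^{n+1}$ (in the paper these are the coordinates of a $C^2$ cubic spline: end second derivatives and knot values). $\|\cdot\|$ is the Euclidean norm. *)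

(* Defs.v *)
From HB Require Import structures.
From mathcomp Require Import all_boot all_order all_algebra.
From mathcomp Require Import all_classical all_reals all_analysis.
Set Implicit Arguments. Unset Strict Implicit. Unset Printing Implicit Defensive.
Import Order.TTheory GRing.Theory Num.Theory.
Import numFieldNormedType.Exports.
Local Open Scope ring_scope.

(* Coordinates of R^(n+3): index 0 = u_1, indices 1..n+1 = p, index n+2 = u_(n+1). *)

Definition Proj (R : realType) (n : nat) : 'M[R]_(n.+1, n.+3) :=
  \matrix_(i < n.+1, j < n.+3) ((j : nat) == i.+1)%:R.

Definition Hpen (R : realType) (n : nat) (P : 'M[R]_(n.+3)) (l : R) : 'M[R]_(n.+3) :=
  invmx (l *: P + (Proj R n)^T *m Proj R n).

Definition embed (R : realType) (n : nat) (u1 : R) (y : 'cV[R]_(n.+1)) (u2 : R)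
  : 'cV[R]_(n.+3) :=
  \col_(j < n.+3)
     (if (j : nat) == 0%N then u1
      else if (j : nat) == n.+2 then u2
      else y (inord (j.-1)) 0).

Definition qform (R : realType) (k : nat) (P : 'M[R]_k) (v : 'cV[R]_k) : R :=
  (v^T *m P *m v) 0 0.

Definition sqnorm (R : realType) (k : nat) (v : 'cV[R]_k) : R :=
  \sum_(i < k) v i 0 ^+ 2.

Definition psd (R : realType) (k : nat) (P : 'M[R]_k) : Prop :=
  forall v : 'cV[R]_k, 0 <= qform P v.

Definition corner (R : realType) (n : nat) (P : 'M[R]_(n.+3)) : 'M[R]_2 :=
  \matrix_(i < 2, j < 2)
     P (if (i : nat) == 0%N then ord0 else ord_max)
       (if (j : nat) == 0%N then ord0 else ord_max).

(* Main.v *)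
Require Import Defs.
From HB Require Import structures.
From mathcomp Require Import all_boot all_order all_algebra.
From mathcomp Require Import all_classical all_reals all_analysis.
From mathcomp Require Import zify lra.
Set Implicit Arguments. Unset Strict Implicit. Unset Printing Implicit Defensive.
Import Order.TTheory GRing.Theory Num.Theory.
Import numFieldNormedType.Exports.
Local Open Scope ring_scope.
Local Open Scope classical_set_scope.

Definition dot (R : realType) (k : nat) (u v : 'cV[R]_k) : R := (u^T *m v) 0 0.

Lemma dotE (R : realType) k (u v : 'cV[R]_k) : dot u v = \sum_i u i 0 * v i 0.
Proof. by rewrite /dot mxE; apply: eq_bigr => i _; rewrite mxE. Qed.

Lemma dotC (R : realType) k (u v : 'cV[R]_k) : dot u v = dot v u.
Proof. by rewrite !dotE; apply: eq_bigr => i _; rewrite mulrC. Qed.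

Lemma dotDr (R : realType) k (u v w : 'cV[R]_k) : dot u (v + w) = dot u v + dot u w.
Proof. by rewrite /dot mulmxDr mxE. Qed.

Lemma dotDl (R : realType) k (u v w : 'cV[R]_k) : dot (v + w) u = dot v u + dot w u.
Proof. by rewrite dotC dotDr !(dotC u). Qed.

Lemma dotZr (R : realType) k a (u v : 'cV[R]_k) : dot u (a *: v) = a * dot u v.
Proof. by rewrite /dot -scalemxAr mxE. Qed.

Lemma dotZl (R : realType) k a (u v : 'cV[R]_k) : dot (a *: v) u = a * dot v u.
Proof. by rewrite dotC dotZr dotC. Qed.

Lemma dotNr (R : realType) k (u v : 'cV[R]_k) : dot u (- v) = - dot u v.
Proof. by rewrite -scaleN1r dotZr mulN1r. Qed.

Lemma dotNl (R : realType) k (u v : 'cV[R]_k) : dot (- v) u = - dot v u.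
Proof. by rewrite dotC dotNr dotC. Qed.

Lemma dotBr (R : realType) k (u v w : 'cV[R]_k) : dot u (v - w) = dot u v - dot u w.
Proof. by rewrite dotDr dotNr. Qed.

Lemma dotBl (R : realType) k (u v w : 'cV[R]_k) : dot (v - w) u = dot v u - dot w u.
Proof. by rewrite dotDl dotNl. Qed.

Lemma dotMr (R : realType) k l (A : 'M[R]_(k, l)) u v :
  dot u (A *m v) = dot (A^T *m u) v.
Proof. by rewrite /dot mulmxA trmx_mul trmxK. Qed.

Lemma dot0r (R : realType) k (u : 'cV[R]_k) : dot u 0 = 0.
Proof. by rewrite /dot mulmx0 mxE. Qed.

Lemma sqnorm_dot (R : realType) k (u : 'cV[R]_k) : sqnorm u = dot u u.
Proof. by rewrite dotE /sqnorm; apply: eq_bigr => i _; rewrite expr2. Qed.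

Lemma sqnorm_ge0 (R : realType) k (u : 'cV[R]_k) : 0 <= sqnorm u.
Proof. by apply: sumr_ge0 => i _; rewrite sqr_ge0. Qed.

Lemma sqnorm_ge (R : realType) k (u : 'cV[R]_k) i : u i 0 ^+ 2 <= sqnorm u.
Proof.
rewrite /sqnorm (bigD1 i) //= lerDl; apply: sumr_ge0 => j _; exact: sqr_ge0.
Qed.

Lemma sqnorm_eq0 (R : realType) k (u : 'cV[R]_k) : sqnorm u = 0 -> u = 0.
Proof.
move=> H; apply/matrixP => i j; rewrite (ord1 j) mxE.
have := sqnorm_ge u i; rewrite H => h.
have : u i 0 ^+ 2 = 0 by apply/eqP; rewrite eq_le h sqr_ge0.
by move/eqP; rewrite sqrf_eq0 => /eqP.
Qed.

Lemma qformE (R : realType) k (P : 'M[R]_k) v : qform P v = dot v (P *m v).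
Proof. by rewrite /qform /dot mulmxA. Qed.


Lemma ord3_cases n (j : 'I_(n.+3)) :
  j = ord0 \/ j = ord_max \/ exists i : 'I_(n.+1), j = inord i.+1.
Proof.
case: j => [[|j] Hj].
  by left; apply: val_inj.
case: (eqVneq j n.+1) => [E|N].
  by right; left; apply: val_inj; rewrite /= E.
right; right.
have Hi : (j < n.+1)%N by move: Hj N; lia.
exists (Ordinal Hi); apply: val_inj; rewrite /= inordK //.
Qed.

Lemma inordS n (i : 'I_(n.+1)) : ((inord i.+1 : 'I_(n.+3)) : nat) = i.+1.
Proof. by rewrite inordK //; move: (ltn_ord i); lia. Qed.

Lemma sum3 (R : realType) n (f : 'I_(n.+3) -> R) :
  \sum_j f j = f ord0 + \sum_(i < n.+1) f (inord i.+1) + f ord_max.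
Proof.
rewrite big_ord_recl big_ord_recr /= addrA.
have -> : lift ord0 (@ord_max n.+1) = ord_max by apply: val_inj.
congr (_ + _); congr (_ + _); apply: eq_bigr => i _; congr f; apply: val_inj => /=.
by rewrite inordS.
Qed.

Lemma mulmx_sum3 (R : realType) n (P : 'M[R]_(n.+3)) (z : 'cV[R]_(n.+3)) k :
  (P *m z) k 0 = P k ord0 * z ord0 0
     + \sum_(i < n.+1) P k (inord i.+1) * z (inord i.+1) 0 + P k ord_max * z ord_max 0.
Proof. by rewrite mxE sum3. Qed.

Lemma Proj_mul (R : realType) n (z : 'cV[R]_(n.+3)) (i : 'I_(n.+1)) :
  (Proj R n *m z) i 0 = z (inord i.+1) 0.
Proof.
rewrite mxE (bigD1 (inord i.+1)) //= mxE inordS eqxx mul1r big1 ?addr0 //.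
move=> j Hj; rewrite mxE; case: eqP => [E|]; last by rewrite mul0r.
by exfalso; move/eqP: Hj; apply; apply: val_inj; rewrite /= inordS.
Qed.

Lemma ProjT_mul (R : realType) n (w : 'cV[R]_(n.+1)) (j : 'I_(n.+3)) :
  ((Proj R n)^T *m w) j 0 =
    if ((j : nat) == 0%N) || ((j : nat) == n.+2) then 0 else w (inord j.-1) 0.
Proof.
rewrite mxE.
case: ifP => [H|H].
  apply: big1 => i _; rewrite !mxE.
  case: eqP => [E|]; last by rewrite mul0r.
  exfalso; move: H (ltn_ord i); rewrite E; lia.
have Hj : (j.-1 < n.+1)%N by move: H (ltn_ord j); lia.
rewrite (bigD1 (inord j.-1)) //= !mxE inordK // .
have -> : (j : nat) == j.-1.+1 by move: H; lia.
rewrite mul1r big1 ?addr0 // => i Hi; rewrite !mxE.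
case: eqP => [E|]; last by rewrite mul0r.
by exfalso; move/eqP: Hi; apply; apply: val_inj; rewrite /= inordK // E.
Qed.

Lemma embed0 (R : realType) n (y : 'cV[R]_(n.+1)) : embed 0 y 0 = (Proj R n)^T *m y.
Proof.
apply/matrixP => j k; rewrite (ord1 k) ProjT_mul mxE.
case: eqP => [->|]; first by [].
case: eqP => [->|]; by [].
Qed.

Lemma embed_mid (R : realType) n u1 (y : 'cV[R]_(n.+1)) u2 (i : 'I_(n.+1)) :
  embed u1 y u2 (inord i.+1) 0 = y i 0.
Proof.
rewrite mxE inordS /=.
have -> : (i.+1 == n.+2) = false by move: (ltn_ord i); lia.
by rewrite inord_val.
Qed.

Lemma embed_0 (R : realType) n u1 (y : 'cV[R]_(n.+1)) u2 : embed u1 y u2 ord0 0 = u1.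
Proof. by rewrite mxE. Qed.

Lemma embed_max (R : realType) n u1 (y : 'cV[R]_(n.+1)) u2 : embed u1 y u2 ord_max 0 = u2.
Proof. by rewrite mxE /= eqxx. Qed.

Lemma Proj_embed (R : realType) n u1 (y : 'cV[R]_(n.+1)) u2 :
  Proj R n *m embed u1 y u2 = y.
Proof. by apply/matrixP => i k; rewrite (ord1 k) Proj_mul embed_mid. Qed.

Lemma QE (R : realType) n (z : 'cV[R]_(n.+3)) :
  z ord0 0 = 0 -> z ord_max 0 = 0 -> (Proj R n)^T *m (Proj R n *m z) = z.
Proof.
move=> h0 hm; apply/matrixP => j k; rewrite (ord1 k) ProjT_mul.
case: (ord3_cases j) => [->|[->|[i ->]]] /=; first by rewrite h0.
  by rewrite eqxx hm.
rewrite (inordS i) /=.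
have -> : (i.+1 == n.+2) = false by move: (ltn_ord i); lia.
by rewrite Proj_mul /= inord_val.
Qed.

Lemma Q0 (R : realType) n (z : 'cV[R]_(n.+3)) :
  ((Proj R n)^T *m (Proj R n *m z)) ord0 0 = 0 /\
  ((Proj R n)^T *m (Proj R n *m z)) ord_max 0 = 0.
Proof. by rewrite !ProjT_mul /= ?eqxx ?orbT. Qed.


Lemma sum_bound (R : realType) n (f g : 'I_n -> R) a :
  0 <= a -> (forall i, `|g i| <= a) ->
  `|\sum_i f i * g i| <= (\sum_i `|f i|) * a.
Proof.
move=> a0 H; rewrite mulr_suml; apply: (le_trans (ler_norm_sum _ _ _)).
apply: ler_sum => i _; rewrite normrM; apply: ler_wpM2l => //.
Qed.

Lemma bound (R : realType) n (P : 'M[R]_(n.+3)) : corner P \in unitmx ->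
  exists K : R, 0 <= K /\ forall (z : 'cV[R]_(n.+3)) a, 0 <= a ->
    `|(P *m z) ord0 0| <= a -> `|(P *m z) ord_max 0| <= a ->
    (forall i : 'I_(n.+1), `|z (inord i.+1) 0| <= a) ->
    forall j, `|z j 0| <= K * a.
Proof.
move=> Cu.
set Ci := invmx (corner P).
set S0 := \sum_(i < n.+1) `|P ord0 (inord i.+1)|.
set Sm := \sum_(i < n.+1) `|P ord_max (inord i.+1)|.
set B := 1 + S0 + Sm.
set cm := `|Ci 0 0| + `|Ci 0 1| + `|Ci 1 0| + `|Ci 1 1|.
have S00 : 0 <= S0 by apply: sumr_ge0.
have Sm0 : 0 <= Sm by apply: sumr_ge0.
have cm0 : 0 <= cm by rewrite /cm; apply: addr_ge0 => //; rewrite ?addr_ge0.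
have B0 : 0 <= B by rewrite /B !addr_ge0.
exists (1 + cm * B); split; first by rewrite addr_ge0 // mulr_ge0.
move=> z a a0 h0 hm hi.
set c0 := (P *m z) ord0 0 - \sum_(i < n.+1) P ord0 (inord i.+1) * z (inord i.+1) 0.
set c1 := (P *m z) ord_max 0 - \sum_(i < n.+1) P ord_max (inord i.+1) * z (inord i.+1) 0.
have hc0 : `|c0| <= B * a.
  apply: (le_trans (ler_normB _ _)).
  have := sum_bound (fun i => P ord0 (inord i.+1)) a0 hi.
  rewrite /B -/S0; move: h0; set X := `|_|; set Y := `|_|.
  move=> h1 h2; rewrite !mulrDl mul1r; have : 0 <= Sm * a by rewrite mulr_ge0.
  lra.
have hc1 : `|c1| <= B * a.
  apply: (le_trans (ler_normB _ _)).
  have := sum_bound (fun i => P ord_max (inord i.+1)) a0 hi.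
  rewrite /B -/Sm; move: hm; set X := `|_|; set Y := `|_|.
  move=> h1 h2; rewrite !mulrDl mul1r; have : 0 <= S0 * a by rewrite mulr_ge0.
  lra.
set w : 'cV[R]_2 := \col_(i < 2) (if (i : nat) == 0%N then z ord0 0 else z ord_max 0).
set c : 'cV[R]_2 := \col_(i < 2) (if (i : nat) == 0%N then c0 else c1).
have Cw : corner P *m w = c.
  apply/matrixP => i k; rewrite (ord1 k) mxE !big_ord_recl big_ord0 !mxE /=.
  rewrite /c0 /c1 !mulmx_sum3.
  case: i => [[|[|//]] Hi] /=.
    by rewrite addr0; lra.
  by rewrite addr0; lra.
have wE : w = Ci *m c by rewrite -Cw /Ci mulKmx.
have hw : forall k : 'I_2, `|w k 0| <= cm * B * a.
  move=> k; rewrite wE mxE !big_ord_recl big_ord0 addr0 !mxE /=.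
  apply: (le_trans (ler_normD _ _)); rewrite !normrM.
  have e1 : `|Ci k 0| * `|c0| <= `|Ci k 0| * (B * a) by apply: ler_wpM2l.
  have e2 : `|Ci k (lift 0 0)| * `|c1| <= `|Ci k (lift 0 0)| * (B * a) by apply: ler_wpM2l.
  apply: (le_trans (lerD e1 e2)); rewrite -mulrDl -mulrA; apply: ler_wpM2r.
    by rewrite mulr_ge0.
  have -> : lift 0 0 = 1 :> 'I_2 by apply: val_inj.
  clear e1 e2; rewrite /cm; case: k => [[|[|//]] Hk]; rewrite /=.
    have -> : Ordinal Hk = 0 by apply: val_inj.
    by have := normr_ge0 (Ci 1 0); have := normr_ge0 (Ci 1 1); lra.
  have -> : Ordinal Hk = 1 by apply: val_inj.
  by have := normr_ge0 (Ci 0 0); have := normr_ge0 (Ci 0 1); lra.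
have Ka : a <= (1 + cm * B) * a.
  by rewrite mulrDl mul1r lerDl mulr_ge0 // mulr_ge0.
move=> j; case: (ord3_cases j) => [->|[->|[i ->]]].
- have := hw 0; rewrite mxE /= => h; apply: (le_trans h).
  by apply: ler_wpM2r => //; lra.
- have := hw 1; rewrite mxE /= => h; apply: (le_trans h).
  by apply: ler_wpM2r => //; lra.
- exact: le_trans (hi i) Ka.
Qed.


Definition Mop (R : realType) n (P : 'M[R]_(n.+3)) (l : R) (z : 'cV[R]_(n.+3)) :=
  l *: (P *m z) + (Proj R n)^T *m (Proj R n *m z).

Lemma MopE (R : realType) n (P : 'M[R]_(n.+3)) l z :
  (l *: P + (Proj R n)^T *m Proj R n) *m z = Mop P l z.
Proof. by rewrite /Mop mulmxDl -scalemxAl mulmxA. Qed.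

Lemma energy (R : realType) n (P : 'M[R]_(n.+3)) l z :
  dot z (Mop P l z) = l * qform P z + sqnorm (Proj R n *m z).
Proof. by rewrite /Mop dotDr dotZr qformE [dot z (_^T *m _)]dotMr trmxK sqnorm_dot. Qed.

Lemma Mop0 (R : realType) n (P : 'M[R]_(n.+3)) l z :
  Mop P l z ord0 0 = l * (P *m z) ord0 0 /\ Mop P l z ord_max 0 = l * (P *m z) ord_max 0.
Proof.
have [h1 h2] := Q0 z.
by split; rewrite /Mop mxE ?h1 ?h2 addr0 [LHS]mxE.
Qed.

Lemma Munit (R : realType) n (P : 'M[R]_(n.+3)) l :
  P^T = P -> psd P -> corner P \in unitmx -> 0 < l ->
  (l *: P + (Proj R n)^T *m Proj R n) \in unitmx.
Proof.
move=> sP pP Cu l0.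
have [K [K0 HK]] := bound Cu.
rewrite -row_free_unit; apply: inj_row_free => v Hv.
set w := v^T.
have Hw : Mop P l w = 0.
  rewrite -MopE; apply: trmx_inj; rewrite trmx_mul trmxK trmx0 -Hv; congr (_ *m _).
  by rewrite raddfD /= linearZ /= sP trmx_mul trmxK.
have e := energy P l w; rewrite Hw dot0r in e.
have q0 := pP w.
have s0 := sqnorm_ge0 (Proj R n *m w).
have sq : sqnorm (Proj R n *m w) = 0.
  apply/eqP; rewrite eq_le s0 andbT.
  have : 0 <= l * qform P w by rewrite mulr_ge0 // ltW.
  lra.
have pw := sqnorm_eq0 sq.
have [m0 mm] := Mop0 P l w.
have z0 : `|(P *m w) ord0 0| <= 0.
  have : l * (P *m w) ord0 0 == 0 by rewrite -m0 Hw mxE.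
  by rewrite mulf_eq0 gt_eqF //= => /eqP ->; rewrite normr0.
have zm : `|(P *m w) ord_max 0| <= 0.
  have : l * (P *m w) ord_max 0 == 0 by rewrite -mm Hw mxE.
  by rewrite mulf_eq0 gt_eqF //= => /eqP ->; rewrite normr0.
have zi : forall i : 'I_(n.+1), `|w (inord i.+1) 0| <= 0.
  by move=> i; rewrite -Proj_mul pw mxE normr0.
have := HK w 0 (lexx 0) z0 zm zi; rewrite mulr0 => H.
apply: trmx_inj; rewrite trmx0; apply/matrixP => j k; rewrite (ord1 k) mxE.
have := H j; rewrite /w mxE normr_le0 => /eqP ->; by rewrite mxE.
Qed.

Lemma Hpen_sol (R : realType) n (P : 'M[R]_(n.+3)) l b :
  P^T = P -> psd P -> corner P \in unitmx -> 0 < l ->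
  Mop P l (Hpen P l *m b) = b.
Proof.
move=> sP pP Cu l0; rewrite -MopE /Hpen mulKVmx //; exact: Munit.
Qed.

Lemma mxnorm_le (R : realType) k (v : 'cV[R]_k) e :
  0 <= e -> (forall j, `|v j 0| <= e) -> `|v| <= e.
Proof.
move=> e0 H; rewrite /Num.Def.normr /= mx_normrE (bigmax_le _ e0) //= => -[i j] _.
by rewrite (ord1 j) H.
Qed.


Lemma sq_le_norm (R : realType) (x a : R) : 0 <= a -> x ^+ 2 <= a ^+ 2 -> `|x| <= a.
Proof.
move=> a0 h; rewrite ler_norml; apply/andP; split; rewrite !expr2 in h; nra.
Qed.

Lemma MopB (R : realType) n (P : 'M[R]_(n.+3)) l u v :
  Mop P l (u - v) = Mop P l u - Mop P l v.
Proof.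
rewrite /Mop !mulmxBr scalerBr; set a := l *: _; set b := l *: _.
set c := _ *m (_ *m u); set d := _ *m (_ *m v).
by rewrite opprD !addrA [a - b + c]addrAC.
Qed.

Lemma part1_lim (R : realType) n (P : 'M[R]_(n.+3)) (y : 'cV[R]_(n.+1)) u1 u2 :
  P^T = P -> psd P -> corner P \in unitmx ->
  (P *m embed u1 y u2) ord0 0 = 0 -> (P *m embed u1 y u2) ord_max 0 = 0 ->
  Hpen P l *m embed 0 y 0 @[l --> 0^'+] --> embed u1 y u2.
Proof.
move=> sP pP Cu g0 gm.
have [K [K0 HK]] := bound Cu.
set v0 := embed u1 y u2.
set g := P *m v0.
set h := Proj R n *m g.
set H := sqnorm h.
have H0 : 0 <= H by exact: sqnorm_ge0.
have gE : g = (Proj R n)^T *m h by rewrite /h QE.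
apply/cvgrPdist_le => eps eps0.
set T := K * (1 + H) + 1.
have T0 : 0 < T by rewrite /T; apply: ltr_pwDr => //; rewrite mulr_ge0 // addr_ge0.
set del := eps / T.
have del0 : 0 < del by rewrite divr_gt0.
near=> l.
have l0 : 0 < l by near: l; exact: nbhs_right_gt.
have ld : l < del by near: l; exact: nbhs_right_lt.
set z := Hpen P l *m embed 0 y 0 - v0.
have Mz : Mop P l z = - (l *: g).
  rewrite /z MopB Hpen_sol // /Mop Proj_embed embed0.
  by rewrite opprD addrA addrC addKr.
set p := Proj R n *m z.
have en := energy P l z.
rewrite Mz dotNr dotZr gE dotMr trmxK -/p in en.
have q0 := pP z.
have sq := sqnorm_ge0 (p + l *: h).
rewrite sqnorm_dot !(dotDl, dotDr, dotZl, dotZr) (dotC h p) in sq.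
have Hd : H = dot h h by rewrite /H sqnorm_dot.
rewrite sqnorm_dot in en.
have lq : 0 <= l * qform P z by rewrite mulr_ge0 // ltW.
have pp : dot p p <= l ^+ 2 * H.
  rewrite expr2 Hd; move: en sq lq; set pp := dot p p; set D := dot p h; set q := qform P z.
  set HH := dot h h; nra.
have hi : forall i : 'I_(n.+1), `|z (inord i.+1) 0| <= l * (1 + H).
  move=> i; apply: sq_le_norm; first by rewrite mulr_ge0 ?addr_ge0 // ltW.
  rewrite -Proj_mul -/p; apply: (le_trans (sqnorm_ge _ _)).
  rewrite -sqnorm_dot in pp; apply: (le_trans pp).
  rewrite exprMn ler_wpM2l ?exprn_ge0 ?ltW // expr2; nra.
have [m0 mm] := Mop0 P l z.
have z0 : `|(P *m z) ord0 0| <= l * (1 + H).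
  have : l * (P *m z) ord0 0 == 0.
    by rewrite -m0 Mz mxE [(l *: g) _ _]mxE -/g g0 mulr0 oppr0.
  rewrite mulf_eq0 gt_eqF //= => /eqP ->; rewrite normr0 mulr_ge0 ?addr_ge0 // ltW.
have zm : `|(P *m z) ord_max 0| <= l * (1 + H).
  have : l * (P *m z) ord_max 0 == 0.
    by rewrite -mm Mz mxE [(l *: g) _ _]mxE -/g gm mulr0 oppr0.
  rewrite mulf_eq0 gt_eqF //= => /eqP ->; rewrite normr0 mulr_ge0 ?addr_ge0 // ltW.
have la : 0 <= l * (1 + H) by rewrite mulr_ge0 ?addr_ge0 // ltW.
have Hz := HK z _ la z0 zm hi.
apply: mxnorm_le; first exact: ltW.
move=> j.
have -> : (v0 - Hpen P l *m embed 0 y 0) j 0 = - z j 0 by rewrite /z !mxE opprB.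
rewrite normrN.
apply: (le_trans (Hz j)).
have : l * T <= eps by rewrite -ler_pdivlMr // ltW.
rewrite /T; nra.
Unshelve. all: by end_near. Qed.


Lemma part1 (R : realType) n (P : 'M[R]_(n.+3)) (y : 'cV[R]_(n.+1)) :
  P^T = P -> psd P -> corner P \in unitmx ->
  (exists u1 u2 : R,
     (forall v1 v2 : R, qform P (embed u1 y u2) <= qform P (embed v1 y v2)) /\
     u1 * P ord0 ord0 + u2 * P ord0 ord_max
       = - \sum_(i < n.+1) y i 0 * P ord0 (inord i.+1) /\
     u1 * P ord_max ord0 + u2 * P ord_max ord_max
       = - \sum_(i < n.+1) y i 0 * P ord_max (inord i.+1) /\
     (Hpen P l *m embed 0 y 0 @[l --> 0^'+] --> embed u1 y u2) /\
     (~ (\sum_(i < n.+1) y i 0 * P ord0 (inord i.+1) = 0 /\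
         \sum_(i < n.+1) y i 0 * P ord_max (inord i.+1) = 0) ->
      u1 != 0 \/ u2 != 0)).
Proof.
move=> sP pP Cu.
set S1 := \sum_(i < n.+1) y i 0 * P ord0 (inord i.+1).
set S2 := \sum_(i < n.+1) y i 0 * P ord_max (inord i.+1).
set c : 'cV[R]_2 := \col_(i < 2) (if (i : nat) == 0%N then - S1 else - S2).
set u := invmx (corner P) *m c.
have Cc : corner P *m u = c by rewrite /u mulKVmx.
have l01 : lift 0 0 = 1 :> 'I_2 by apply: val_inj.
have e1 : u 0 0 * P ord0 ord0 + u 1 0 * P ord0 ord_max = - S1.
  have := congr1 (fun M : 'cV[R]_2 => M 0 0) Cc.
  rewrite [LHS]mxE !big_ord_recl big_ord0 !mxE /= l01 => <-.
  by rewrite addr0; lra.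
have e2 : u 0 0 * P ord_max ord0 + u 1 0 * P ord_max ord_max = - S2.
  have := congr1 (fun M : 'cV[R]_2 => M 1 0) Cc.
  rewrite [LHS]mxE !big_ord_recl big_ord0 !mxE /= l01 => <-.
  by rewrite addr0; lra.
set u1 := u 0 0; set u2 := u 1 0.
have g0 : (P *m embed u1 y u2) ord0 0 = 0.
  rewrite mulmx_sum3 embed_0 embed_max.
  have -> : \sum_(i < n.+1) P ord0 (inord i.+1) * embed u1 y u2 (inord i.+1) 0 = S1.
    by apply: eq_bigr => i _; rewrite embed_mid mulrC.
  move: e1; rewrite -/u1 -/u2; lra.
have gm : (P *m embed u1 y u2) ord_max 0 = 0.
  rewrite mulmx_sum3 embed_0 embed_max.
  have -> : \sum_(i < n.+1) P ord_max (inord i.+1) * embed u1 y u2 (inord i.+1) 0 = S2.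
    by apply: eq_bigr => i _; rewrite embed_mid mulrC.
  move: e2; rewrite -/u1 -/u2; lra.
exists u1, u2; split; [|split; [exact: e1|split; [exact: e2|split]]].
- move=> v1 v2.
  set v0 := embed u1 y u2.
  set d := embed v1 y v2 - v0.
  have -> : embed v1 y v2 = v0 + d by rewrite /d addrC subrK.
  have dg : dot d (P *m v0) = 0.
    rewrite dotE sum3 g0 gm !mulr0 add0r addr0; apply: big1 => i _.
    have -> : (embed v1 y v2 - v0) (inord i.+1) 0 = embed v1 y v2 (inord i.+1) 0 - v0 (inord i.+1) 0 by rewrite !mxE.
    by rewrite /v0 !embed_mid subrr mul0r.
  have dg' : dot v0 (P *m d) = 0 by rewrite dotMr sP dotC.
  rewrite !qformE mulmxDr dotDl !dotDr dg dg' addr0.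
  have := pP d; rewrite qformE; lra.
- exact: part1_lim.
- move=> H.
  case: (eqVneq u1 0) => [h1|]; last by left.
  case: (eqVneq u2 0) => [h2|]; last by right.
  exfalso; apply: H; move: e1 e2; rewrite -/u1 -/u2 h1 h2 !mul0r !add0r.
  by move=> a b; split; lra.
Qed.


Lemma mxXXt0 (R : realType) k m (X : 'M[R]_(k, m)) : X *m X^T = 0 -> X = 0.
Proof.
move=> H; apply/matrixP => i j; rewrite mxE.
have : (X *m X^T) i i = 0 by rewrite H mxE.
rewrite mxE => Hs.
have : X i j ^+ 2 <= 0.
  rewrite -Hs (bigD1 j) //= mxE -expr2 lerDl; apply: sumr_ge0 => l _.
  by rewrite mxE -expr2 sqr_ge0.
move=> h; have : X i j ^+ 2 == 0 by rewrite eq_le h sqr_ge0.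
by rewrite sqrf_eq0 => /eqP.
Qed.

Lemma rank_AtA (R : realType) k m (A : 'M[R]_(k, m)) : \rank (A^T *m A) = \rank A.
Proof.
set G := A^T *m A.
have s1 : (kermx G <= kermx A^T)%MS.
  apply/sub_kermxP; apply: mxXXt0.
  rewrite trmx_mul trmxK mulmxA -(mulmxA _ A^T) -/G.
  by have /sub_kermxP -> := submx_refl (kermx G); rewrite mul0mx.
have s2 : (kermx A^T <= kermx G)%MS.
  by apply/sub_kermxP; rewrite mulmxA mulmx_ker mul0mx.
have e : \rank (kermx G) = \rank (kermx A^T).
  by apply/eqP; rewrite eqn_leq !mxrankS.
rewrite !mxrank_ker mxrank_tr in e.
have h1 := rank_leq_row G; have h2 := rank_leq_col A.
move: e h1 h2; lia.
Qed.

Lemma sub_AtA (R : realType) k m (A : 'M[R]_(k, m)) : (A <= A^T *m A)%MS.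
Proof.
have sub : (A^T *m A <= A)%MS := submxMl _ _.
have [_ E] := mxrank_leqif_eq sub.
rewrite rank_AtA eqxx in E.
by move/esym/andP: E => [].
Qed.


Lemma part2_alg (R : realType) n (P : 'M[R]_(n.+3)) (y : 'cV[R]_(n.+1)) :
  P^T = P ->
  exists (v : 'cV[R]_(n.+3)) (s : 'cV[R]_(n.+3)),
     P *m v = 0 /\
     (forall w : 'cV[R]_(n.+3), P *m w = 0 ->
        sqnorm (y - Proj R n *m v) <= sqnorm (y - Proj R n *m w)) /\
     (Proj R n)^T *m (y - Proj R n *m v) = P *m s.
Proof.
move=> sP.
set Kr := kermx P.
set K := Kr^T.
have PK : P *m K = 0.
  by apply: trmx_inj; rewrite trmx_mul trmxK sP mulmx_ker trmx0.
have kerP : forall w : 'cV[R]_(n.+3), P *m w = 0 -> exists t : 'cV[R]_(n.+3), w = K *m t.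
  move=> w Pw.
  have : (w^T <= Kr)%MS.
    by apply/sub_kermxP; rewrite -sP -trmx_mul Pw trmx0.
  case/submxP => D HD; exists D^T.
  by rewrite /K -trmx_mul -HD trmxK.
set A := Proj R n *m K.
set G := A^T *m A.
have : (y^T *m A <= G)%MS by apply: submx_trans (submxMl _ _) (sub_AtA A).
case/submxP => s Hs.
set t := s^T.
have Gt : G *m t = A^T *m y.
  have GT : G^T = G by rewrite /G trmx_mul trmxK.
  by apply: trmx_inj; rewrite trmx_mul trmxK GT -Hs trmx_mul trmxK.
set v := K *m t.
set r := y - Proj R n *m v.
have rE : r = y - A *m t by rewrite /r /v /A mulmxA.
have Ar : A^T *m r = 0 by rewrite rE mulmxBr mulmxA -/G Gt subrr.
exists v.
have : ((r^T *m Proj R n) <= P)%MS.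
  rewrite submxE.
  have : ((cokermx P)^T <= Kr)%MS.
    by apply/sub_kermxP; rewrite -[X in _ *m X]sP -trmx_mul mulmx_coker trmx0.
  case/submxP => T HT.
  have -> : cokermx P = K *m T^T by rewrite /K -trmx_mul -HT trmxK.
  rewrite mulmxA -(mulmxA _ _ K) -/A.
  have -> : r^T *m A = (A^T *m r)^T by rewrite trmx_mul trmxK.
  by rewrite Ar trmx0 !mul0mx.
case/submxP => s2 Hs2.
exists s2^T; split; [|split].
- by rewrite /v mulmxA PK mul0mx.
- move=> w /kerP [t' ->].
  have -> : y - Proj R n *m (K *m t') = r + A *m (t - t').
    by rewrite rE mulmxBr !mulmxA addrA subrK.
  rewrite -/r !sqnorm_dot (dotDl (r + A *m (t - t')) r) (dotDr r r) (dotDr (A *m (t - t')) r).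
  have -> : dot r (A *m (t - t')) = 0 by rewrite dotMr Ar dotC dot0r.
  have -> : dot (A *m (t - t')) r = 0 by rewrite dotC dotMr Ar dotC dot0r.
  have := sqnorm_ge0 (A *m (t - t')); rewrite sqnorm_dot; lra.
- by apply: trmx_inj; rewrite trmx_mul trmxK -/r Hs2 trmx_mul trmxK sP.
Qed.


Lemma part2_lim (R : realType) n (P : 'M[R]_(n.+3)) (y : 'cV[R]_(n.+1)) v s :
  P^T = P -> psd P -> corner P \in unitmx -> P *m v = 0 ->
  (Proj R n)^T *m (y - Proj R n *m v) = P *m s ->
  Hpen P l *m embed 0 y 0 @[l --> +oo] --> v.
Proof.
move=> sP pP Cu Pv Hs.
have [K [K0 HK]] := bound Cu.
set S := qform P s.
have S0 : 0 <= S := pP s.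
set a0 := `|(P *m s) ord0 0|.
set am := `|(P *m s) ord_max 0|.
apply/cvgrPdist_le => eps eps0.
set e := eps / (K + 1).
have e0 : 0 < e by rewrite divr_gt0 // ltr_pwDr.
have Ke : K * e <= eps.
  have -> : eps = (K + 1) * e by rewrite /e mulrC divfK // gt_eqF // ltr_pwDr.
  by rewrite mulrDl mul1r lerDl ltW.
set T := (S + 1) / e ^+ 2 + (a0 + am) / e + 1.
near=> l.
have lT : T < l by near: l; apply: nbhs_pinfty_gt; rewrite num_real.
have t1 : 0 <= (S + 1) / e ^+ 2 by rewrite divr_ge0 ?exprn_ge0 ?addr_ge0 // ltW.
have t2 : 0 <= (a0 + am) / e by rewrite divr_ge0 ?addr_ge0 ?normr_ge0 // ltW.
have l0 : 0 < l by rewrite /T in lT; lra.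
have lS : S + 1 < l * e ^+ 2.
  by rewrite -ltr_pdivrMr ?exprn_gt0 //; rewrite /T in lT; lra.
have lA : a0 + am < l * e.
  by rewrite -ltr_pdivrMr //; rewrite /T in lT; lra.
set z := Hpen P l *m embed 0 y 0 - v.
have Mz : Mop P l z = P *m s.
  rewrite /z MopB Hpen_sol // /Mop Pv scaler0 add0r embed0 -Hs.
  by rewrite mulmxBr.
set p := Proj R n *m z.
have en := energy P l z.
rewrite Mz in en.
have q0 := pP z.
have ps := pP (l *: z - s).
rewrite qformE mulmxBr -scalemxAr dotBl !dotBr !dotZl !dotZr in ps.
rewrite [dot s (P *m z)]dotMr sP (dotC _ z) -!qformE -/S in ps.
have lq : 0 <= l * qform P z by rewrite mulr_ge0 // ltW.
have pp : l * sqnorm p <= S.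
  move: en ps lq; set pp := sqnorm p; set D := dot z (P *m s); set q := qform P z.
  nra.
have hi : forall i : 'I_(n.+1), `|z (inord i.+1) 0| <= e.
  move=> i; apply: sq_le_norm; first exact: ltW.
  rewrite -Proj_mul -/p.
  have := sqnorm_ge p i; set x := p i 0 ^+ 2 => hx.
  have x0 : 0 <= x by rewrite /x sqr_ge0.
  nra.
have [m0 mm] := Mop0 P l z.
rewrite Mz in m0 mm.
have z0 : `|(P *m z) ord0 0| <= e.
  have : l * `|(P *m z) ord0 0| <= l * e.
    rewrite -(ger0_norm (ltW l0)) -normrM -m0 -/a0 (ger0_norm (ltW l0)).
    have : 0 <= am by rewrite normr_ge0.
    lra.
  by rewrite ler_pM2l.
have zm : `|(P *m z) ord_max 0| <= e.
  have : l * `|(P *m z) ord_max 0| <= l * e.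
    rewrite -(ger0_norm (ltW l0)) -normrM -mm -/am (ger0_norm (ltW l0)).
    have : 0 <= a0 by rewrite normr_ge0.
    lra.
  by rewrite ler_pM2l.
have Hz := HK z _ (ltW e0) z0 zm hi.
apply: mxnorm_le; first exact: ltW.
move=> j.
have -> : (v - Hpen P l *m embed 0 y 0) j 0 = - z j 0 by rewrite /z !mxE opprB.
by rewrite normrN; apply: (le_trans (Hz j)).
Unshelve. all: by end_near. Qed.

Unset Implicit Arguments.
Set Strict Implicit.

Theorem corollary2 (R : realType) (n : nat) (P : 'M[R]_(n.+3))
  (y : 'cV[R]_(n.+1)) :
  (1 <= n)%N ->
  P^T = P -> psd P -> corner P \in unitmx ->
  (* (1) lambda -> 0+ *)
  (exists u1 u2 : R,
     (forall v1 v2 : R, qform P (embed u1 y u2) <= qform P (embed v1 y v2)) /\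
     u1 * P ord0 ord0 + u2 * P ord0 ord_max
       = - \sum_(i < n.+1) y i 0 * P ord0 (inord i.+1) /\
     u1 * P ord_max ord0 + u2 * P ord_max ord_max
       = - \sum_(i < n.+1) y i 0 * P ord_max (inord i.+1) /\
     (Hpen P l *m embed 0 y 0 @[l --> 0^'+] --> embed u1 y u2) /\
     (~ (\sum_(i < n.+1) y i 0 * P ord0 (inord i.+1) = 0 /\
         \sum_(i < n.+1) y i 0 * P ord_max (inord i.+1) = 0) ->
      u1 != 0 \/ u2 != 0)) /\
  (* (2) lambda -> +oo *)
  (exists v : 'cV[R]_(n.+3),
     P *m v = 0 /\
     (forall w : 'cV[R]_(n.+3), P *m w = 0 ->
        sqnorm (y - Proj R n *m v) <= sqnorm (y - Proj R n *m w)) /\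
     (Hpen P l *m embed 0 y 0 @[l --> +oo] --> v)).
Proof.
move=> _ sP pP Cu; split; first exact: part1.
have [v [s [Pv [Hmin Hs]]]] := part2_alg y sP.
exists v; split; first exact: Pv.
split; first exact: Hmin.
exact: part2_lim sP pP Cu Pv Hs.
Qed.
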